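(* Let $M$ be a duplicial module in a pre-additive category. For all $n\ge0$, $$\kappa_n=1-b_{n+1}d_n-d_{n-1}b_n .$$
   Context: Let $\mathcal A$ be a pre-additive category. Let $\Lambda_+$ be the category with objects $[n]$, $n\ge0$, where $\Lambda_+([m],[n])$ is the set of weakly monotone $f:\mathbb Z\to\mathbb Z$ with $f(j+m+1)=f(j)+n+1$ for all $j$ and $f(0)\ge0$ (determined by values on $\{0,\dots,m\}$). Define $\varepsilon^n_i:[n-1]\to[n]$ ($n\ge1$, $0\le i\le n$) by $\varepsilon^n_i(j)=j$ for $0\le j<i$, $j+1$ for $i\le j\le n-1$, and $\eta^n_i:[n+1]\to[n]$ ($0\le i\le n+1$) by $\eta^n_i(j)=j$ for $0\le j\le i$, $j-1$ for $i<j\le n+1$. A duplicial module is a functor $M:\Lambda_+^{op}\to\mathcal A$; $M_n=M([n])$, $\partial_{n,i}=M(\varepsilon^n_i):M_n\to M_{n-1}$, $s_{n,i}=M(\eta^n_i):M_n\to M_{n+1}$. Convention $M_{-1}=0$, maps into/out of it zero. Define $b_n=\sum_{i=0}^n(-1)^i\partial_{n,i}$ ($b_0=0$), $d_n=\sum_{i=0}^{n+1}(-1)^is_{n,i}$ ($d_{-1}=0$), and the Karoubi operator $\kappa_n=(-1)^n(\partial_{n+1,0}s_{n,n+1}-s_{n-1,n}\partial_{n,0}):M_n\to M_n$ (so $\kappa_0=\partial_{1,0}s_{0,1}$). *)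

(* Defs.v *)
From HB Require Import structures.
From mathcomp Require Import all_boot all_order all_algebra.
Set Implicit Arguments. Unset Strict Implicit. Unset Printing Implicit Defensive.
Import GRing.Theory.
Local Open Scope ring_scope.

Record preadditive := PreAdditive {
  Obj : Type;
  Hom : Obj -> Obj -> zmodType;
  idm : forall a, Hom a a;
  hcomp : forall a b c, Hom b c -> Hom a b -> Hom a c;
  compA : forall a b c d (h : Hom c d) (g : Hom b c) (f : Hom a b),
      hcomp h (hcomp g f) = hcomp (hcomp h g) f;
  comp1m : forall a b (f : Hom a b), hcomp (idm b) f = f;
  compm1 : forall a b (f : Hom a b), hcomp f (idm a) = f;
  compDl : forall a b c (g1 g2 : Hom b c) (f : Hom a b),
      hcomp (g1 + g2) f = hcomp g1 f + hcomp g2 f;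
  compDr : forall a b c (g : Hom b c) (f1 f2 : Hom a b),
      hcomp g (f1 + f2) = hcomp g f1 + hcomp g f2
}.
Arguments idm {p} a.
Arguments hcomp {p a b c}.

(* Morphisms [m] -> [n] of Lambda_+ : weakly monotone f : Z -> Z with
   f(j + m + 1) = f(j) + n + 1 and f(0) >= 0. *)
Definition isLam (m n : nat) (f : int -> int) : Prop :=
  [/\ (forall x y : int, (x <= y)%R -> (f x <= f y)%R),
      (forall j : int, f (j + (m.+1)%:Z) = f j + (n.+1)%:Z)
    & (0 <= f 0)%R].

(* A duplicial module: a functor Lambda_+^op -> C. [Mmap m n f] is M(f) for
   f : [m] -> [n] in Lambda_+ (values on non-morphisms are irrelevant). *)
Record duplicial (C : preadditive) := Duplicial {
  Mob : nat -> Obj C;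
  Mmap : forall m n : nat, (int -> int) -> @Hom C (Mob n) (Mob m);
  Mext : forall m n (f g : int -> int), isLam m n f -> isLam m n g ->
      (forall j, f j = g j) -> Mmap m n f = Mmap m n g;
  Mid : forall n, Mmap n n (fun j => j) = idm (Mob n);
  Mcomp : forall m n p (f g : int -> int), isLam m n f -> isLam n p g ->
      Mmap m p (fun j => g (f j)) = hcomp (Mmap m n f) (Mmap n p g)
}.
Arguments Mmap {C} d m n _.

(* epsilon^n_i : [n-1] -> [n] (n >= 1), periodically extended. *)
Definition eps (n i : nat) : int -> int := fun j =>
  let q := divz j n%:Z in let r := modz j n%:Z in
  q * (n.+1)%:Z + (if (r < i%:Z)%R then r else r + 1).

(* eta^n_i : [n+1] -> [n], periodically extended. *)
Definition eta (n i : nat) : int -> int := fun j =>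
  let q := divz j (n.+2)%:Z in let r := modz j (n.+2)%:Z in
  q * (n.+1)%:Z + (if (r <= i%:Z)%R then r else r - 1).

Section Ops.
Variables (C : preadditive) (M : duplicial C).

Definition face (n i : nat) : @Hom C (Mob M n.+1) (Mob M n) :=
  Mmap M n n.+1 (eps n.+1 i).
Definition degen (n i : nat) : @Hom C (Mob M n) (Mob M n.+1) :=
  Mmap M n.+1 n (eta n i).

Definition bS (n : nat) : @Hom C (Mob M n.+1) (Mob M n) :=
  \sum_(i < n.+2) (face n i) *~ ((-1) ^+ i).
Definition dd (n : nat) : @Hom C (Mob M n) (Mob M n.+1) :=
  \sum_(i < n.+2) (degen n i) *~ ((-1) ^+ i).

(* s_{n-1,n} partial_{n,0}, which is 0 for n = 0 (M_{-1} = 0) *)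
Definition s_partial (n : nat) : @Hom C (Mob M n) (Mob M n) :=
  match n return @Hom C (Mob M n) (Mob M n) with
  | 0 => 0
  | n'.+1 => hcomp (degen n' n'.+1) (face n' 0)
  end.

Definition kappa (n : nat) : @Hom C (Mob M n) (Mob M n) :=
  (hcomp (face n 0) (degen n n.+1) - s_partial n) *~ ((-1) ^+ n).

(* d_{n-1} b_n, which is 0 for n = 0 (d_{-1} = 0, b_0 = 0) *)
Definition d_b (n : nat) : @Hom C (Mob M n) (Mob M n) :=
  match n return @Hom C (Mob M n) (Mob M n) with
  | 0 => 0
  | n'.+1 => hcomp (dd n') (bS n')
  end.
End Ops.

(* Main.v *)
Require Import Defs.
From mathcomp Require Import all_boot all_order all_algebra zify.
Import Order.TTheory GRing.Theory Num.Theory.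
Local Open Scope ring_scope.
Set Implicit Arguments. Unset Strict Implicit. Unset Printing Implicit Defensive.


Definition per (N M : nat) (f0 : int -> int) (j : int) : int :=
  (divz j N%:Z) * M%:Z + f0 (modz j N%:Z).

Lemma per_val N M f0 q r : (0 < N)%N -> 0 <= r < N%:Z ->
  per N M f0 (q * N%:Z + r) = q * M%:Z + f0 r.
Proof.
move=> N0 hr; rewrite /per divzMDl; last by lia.
rewrite divz_small; last by rewrite abszE; lia.
rewrite addr0 modzMDl modz_small //.
Qed.

Lemma per_val0 N M f0 x : (0 < N)%N -> 0 <= x < N%:Z -> per N M f0 x = f0 x.
Proof.
move=> N0 h; have E : x = 0 * N%:Z + x by lia.
by rewrite {1}E per_val // mul0r add0r.
Qed.

Lemma per_val1 N M f0 x : (0 < N)%N -> N%:Z <= x < (N + N)%:Z ->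
  per N M f0 x = M%:Z + f0 (x - N%:Z).
Proof.
move=> N0 h; have E : x = 1 * N%:Z + (x - N%:Z) by lia.
rewrite {1}E.
rewrite per_val; last (by lia); last by [].
rewrite mul1r; congr (_ + f0 _); lia.
Qed.

Lemma per_per N M f0 j : (0 < N)%N ->
  per N M f0 (j + N%:Z) = per N M f0 j + M%:Z.
Proof.
move=> N0; rewrite {1 2}(divz_eq j N%:Z).
have hm : 0 <= (j %% N%:Z)%Z < N%:Z.
  by rewrite modz_ge0 ?ltz_pmod //; lia.
have -> : (j %/ N%:Z)%Z * N%:Z + (j %% N%:Z)%Z + N%:Z =
   ((j %/ N%:Z)%Z + 1) * N%:Z + (j %% N%:Z)%Z by lia.
rewrite !per_val //; lia.
Qed.

Lemma mono_step (f : int -> int) : (forall j, f j <= f (j + 1)) ->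
  forall x y, x <= y -> f x <= f y.
Proof.
move=> hs x y hxy.
have -> : y = x + (`|y - x|%N)%:Z by lia.
elim: (`|y - x|%N) => [|k IH]; first by rewrite addr0.
apply: (le_trans IH); have -> : x + k.+1%:Z = (x + k%:Z) + 1 by lia.
exact: hs.
Qed.

Lemma per_isLam m n f0 :
  (forall r, 0 <= r -> r < m.+1%:Z -> 0 <= f0 r) ->
  (forall r, 0 <= r -> r + 1 < m.+1%:Z -> f0 r <= f0 (r + 1)) ->
  f0 m%:Z <= n.+1%:Z + f0 0 ->
  isLam m n (per m.+1 n.+1 f0).
Proof.
move=> hpos hmon hwrap; split.
- apply: mono_step => j.
  rewrite {1 2}(divz_eq j m.+1%:Z).
  have hm : 0 <= (j %% m.+1%:Z)%Z < m.+1%:Z.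
    by rewrite modz_ge0 ?ltz_pmod //; lia.
  set q := (j %/ m.+1%:Z)%Z; set r := (j %% m.+1%:Z)%Z in hm *; clearbody q r.
  rewrite per_val //.
  have [hr|hr] := boolP (r + 1 < m.+1%:Z).
    have h1 : 0 <= r by lia.
    rewrite -addrA per_val //; last by lia.
    by rewrite lerD2l; apply: hmon.
  have hr' : r = m%:Z by lia.
  have -> : q * m.+1%:Z + r + 1 = (q + 1) * m.+1%:Z + 0 by rewrite hr'; lia.
  rewrite per_val // hr' mulrDl mul1r -addrA lerD2l; exact: hwrap.
- move=> j; exact: per_per.
- rewrite /per divz_small ?mul0r ?add0r ?modz_small //; try lia.
  apply: hpos; lia.
Qed.


Lemma eps_per k i : eps k.+1 i = per k.+1 k.+2 (fun r => if r < i%:Z then r else r + 1).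
Proof. by []. Qed.
Lemma eta_per k i : eta k i = per k.+2 k.+1 (fun r => if r <= i%:Z then r else r - 1).
Proof. by []. Qed.

Lemma eps_isLam k i : (i <= k.+1)%N -> isLam k k.+1 (eps k.+1 i).
Proof.
move=> hi; rewrite eps_per; apply: per_isLam.
- move=> r h1 h2 /=; repeat case: ifP => ?; lia.
- move=> r h1 h2 /=; repeat case: ifP => ?; lia.
- rewrite /=; repeat case: ifP => ?; lia.
Qed.

Lemma eta_isLam k i : (i <= k.+1)%N -> isLam k.+1 k (eta k i).
Proof.
move=> hi; rewrite eta_per; apply: (@per_isLam k.+1 k).
- move=> r h1 h2 /=; repeat case: ifP => ?; lia.
- move=> r h1 h2 /=; repeat case: ifP => ?; lia.
- rewrite /=; repeat case: ifP => ?; lia.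
Qed.

Lemma id_isLam m : isLam m m (fun j => j).
Proof. by split. Qed.

Lemma comp_isLam m n p f g : isLam m n f -> isLam n p g -> isLam m p (fun j => g (f j)).
Proof.
move=> [f1 f2 f3] [g1 g2 g3]; split.
- by move=> x y h; apply: g1; apply: f1.
- by move=> j; rewrite f2 g2.
- by apply: le_trans g3 (g1 _ _ f3).
Qed.

Lemma lam_shift_nat m n f : isLam m n f -> forall j (q : nat),
  f (j + q%:Z * m.+1%:Z) = f j + q%:Z * n.+1%:Z.
Proof.
move=> [_ f2 _] j; elim => [|q IH]; first by rewrite !mul0r !addr0.
have -> : j + q.+1%:Z * m.+1%:Z = (j + q%:Z * m.+1%:Z) + m.+1%:Z by lia.
rewrite f2 IH; lia.
Qed.

Lemma lam_shift m n f : isLam m n f -> forall j (q : int),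
  f (j + q * m.+1%:Z) = f j + q * n.+1%:Z.
Proof.
move=> hf j [q|q]; first exact: lam_shift_nat.
have := lam_shift_nat hf (j + Negz q * m.+1%:Z) q.+1.
have -> : j + Negz q * m.+1%:Z + q.+1%:Z * m.+1%:Z = j by rewrite NegzE; lia.
rewrite NegzE; lia.
Qed.

Lemma lam_ext m n f g : isLam m n f -> isLam m n g ->
  (forall k, (k <= m)%N -> f k%:Z = g k%:Z) -> forall j, f j = g j.
Proof.
move=> hf hg h j.
rewrite (divz_eq j m.+1%:Z) addrC !(lam_shift hf, lam_shift hg).
have hm : 0 <= (j %% m.+1%:Z)%Z < m.+1%:Z.
  by rewrite modz_ge0 ?ltz_pmod //; lia.
case: (j %% m.+1%:Z)%Z hm => [r|r] hm; last by lia.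
rewrite h //; lia.
Qed.


Ltac pv := first [ rewrite per_val0; [ | by [] | lia ]
                 | rewrite per_val1; [ | by [] | lia ] ].
Ltac crunch k := rewrite ?eps_per ?eta_per;
  rewrite (@per_val0 _ _ _ k%:Z); [ | by [] | lia];
  try (rewrite (@per_val0 _ _ _ k%:Z); [ | by [] | lia]);
  rewrite /=; repeat (case: ifP => ?); try lia;
  repeat (pv; rewrite /=; repeat (case: ifP => ?)); lia.

Lemma P1 n i k : (i <= n.+1)%N -> (k <= n)%N -> eta n i (eps n.+1 i k%:Z) = k%:Z.
Proof. move=> hi hk; crunch k. Qed.
Lemma P2 n i k : (i <= n)%N -> (k <= n)%N -> eta n i (eps n.+1 i.+1 k%:Z) = k%:Z.
Proof. move=> hi hk; crunch k. Qed.
Lemma P3 n i j k : (i <= j)%N -> (j <= n.+1)%N -> ((0 < i)%N || (j < n.+1)%N) ->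
  (k <= n.+1)%N -> eta n.+1 j.+1 (eps n.+2 i k%:Z) = eps n.+1 i (eta n j k%:Z).
Proof. move=> h1 h2 h3 hk. rewrite ?eps_per ?eta_per.
  rewrite (@per_val0 _ _ _ k%:Z); [ | by [] | lia].
  try (rewrite (@per_val0 _ _ _ k%:Z); [ | by [] | lia]).
  case: (ltnP k n.+1) => ?.
  all: rewrite /=; repeat (case: ifP => ?); try lia.
  all: repeat (pv; rewrite /=; repeat (case: ifP => ?)). all: lia.
Qed.
Lemma P4 n i j k : (j < i)%N -> (i <= n.+1)%N ->
  (k <= n.+1)%N -> eta n.+1 j (eps n.+2 i.+1 k%:Z) = eps n.+1 i (eta n j k%:Z).
Proof. move=> h1 h2 hk. rewrite ?eps_per ?eta_per.
  rewrite (@per_val0 _ _ _ k%:Z); [ | by [] | lia].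
  try (rewrite (@per_val0 _ _ _ k%:Z); [ | by [] | lia]).
  rewrite /=; repeat (case: ifP => ?); try lia.
  all: repeat (pv; rewrite /=; repeat (case: ifP => ?)). all: lia.
Qed.


Section HomAlg.
Variable C : preadditive.

Lemma hcomp0l a b c (f : @Defs.Hom C a b) : hcomp (0 : @Defs.Hom C b c) f = 0.
Proof.
have h := compDl (0 : @Defs.Hom C b c) 0 f; rewrite addr0 in h.
by apply: (addrI (hcomp (0 : @Defs.Hom C b c) f)); rewrite addr0 -h.
Qed.
Lemma hcomp0r a b c (g : @Defs.Hom C b c) : hcomp g (0 : @Defs.Hom C a b) = 0.
Proof.
have h := compDr g (0 : @Defs.Hom C a b) 0; rewrite addr0 in h.
by apply: (addrI (hcomp g (0 : @Defs.Hom C a b))); rewrite addr0 -h.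
Qed.
Lemma hcompNl a b c (g : @Defs.Hom C b c) (f : @Defs.Hom C a b) : hcomp (- g) f = - hcomp g f.
Proof. by apply: (addrI (hcomp g f)); rewrite -compDl !subrr hcomp0l. Qed.
Lemma hcompNr a b c (g : @Defs.Hom C b c) (f : @Defs.Hom C a b) : hcomp g (- f) = - hcomp g f.
Proof. by apply: (addrI (hcomp g f)); rewrite -compDr !subrr hcomp0r. Qed.
Lemma hcompBl a b c (g1 g2 : @Defs.Hom C b c) (f : @Defs.Hom C a b) :
  hcomp (g1 - g2) f = hcomp g1 f - hcomp g2 f.
Proof. by rewrite compDl hcompNl. Qed.
Lemma hcompBr a b c (g : @Defs.Hom C b c) (f1 f2 : @Defs.Hom C a b) :
  hcomp g (f1 - f2) = hcomp g f1 - hcomp g f2.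
Proof. by rewrite compDr hcompNr. Qed.
Lemma hcompnl a b c (g : @Defs.Hom C b c) (f : @Defs.Hom C a b) k :
  hcomp (g *+ k) f = hcomp g f *+ k.
Proof. by elim: k => [|k IH]; rewrite ?hcomp0l // !mulrS compDl IH. Qed.
Lemma hcompnr a b c (g : @Defs.Hom C b c) (f : @Defs.Hom C a b) k :
  hcomp g (f *+ k) = hcomp g f *+ k.
Proof. by elim: k => [|k IH]; rewrite ?hcomp0r // !mulrS compDr IH. Qed.
Lemma hcompzl a b c (g : @Defs.Hom C b c) (f : @Defs.Hom C a b) z :
  hcomp (g *~ z) f = hcomp g f *~ z.
Proof. case: z => k; first by rewrite -!pmulrn hcompnl.
by rewrite NegzE !mulrNz hcompNl -!pmulrn hcompnl. Qed.
Lemma hcompzr a b c (g : @Defs.Hom C b c) (f : @Defs.Hom C a b) z :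
  hcomp g (f *~ z) = hcomp g f *~ z.
Proof. case: z => k; first by rewrite -!pmulrn hcompnr.
by rewrite NegzE !mulrNz hcompNr -!pmulrn hcompnr. Qed.
Lemma hcomp_suml a b c (f : @Defs.Hom C a b) (r : seq nat) (P : pred nat) (F : nat -> @Defs.Hom C b c) :
  hcomp (\sum_(i <- r | P i) F i) f = \sum_(i <- r | P i) hcomp (F i) f.
Proof. elim: r => [|x r IH]; rewrite ?big_nil ?hcomp0l // !big_cons; by case: (P x); rewrite ?compDl IH. Qed.
Lemma hcomp_sumr a b c (g : @Defs.Hom C b c) (r : seq nat) (P : pred nat) (F : nat -> @Defs.Hom C a b) :
  hcomp g (\sum_(i <- r | P i) F i) = \sum_(i <- r | P i) hcomp g (F i).
Proof. elim: r => [|x r IH]; rewrite ?big_nil ?hcomp0r // !big_cons; by case: (P x); rewrite ?compDr IH. Qed.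
End HomAlg.

Lemma sgS (V : zmodType) (x : V) i : x *~ ((-1) ^+ i.+1) = - (x *~ ((-1) ^+ i)).
Proof. by rewrite exprS mulN1r mulrNz. Qed.


Section Rels.
Variables (C : preadditive) (M : duplicial C).

Lemma fd_map n i j : (i <= n.+1)%N -> (j <= n.+1)%N ->
  hcomp (face M n i) (degen M n j) = Mmap M n n (fun x => eta n j (eps n.+1 i x)).
Proof.
move=> hi hj; rewrite /face /degen (Mcomp M (eps_isLam hi) (eta_isLam hj)) //.
Qed.

Lemma df_map n i j : (i <= n.+1)%N -> (j <= n.+1)%N ->
  hcomp (degen M n j) (face M n i) = Mmap M n.+1 n.+1 (fun x => eps n.+1 i (eta n j x)).
Proof.
move=> hi hj; rewrite /face /degen (Mcomp M (eta_isLam hj) (eps_isLam hi)) //.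
Qed.

Lemma R1 n i : (i <= n.+1)%N -> hcomp (face M n i) (degen M n i) = idm (Mob M n).
Proof.
move=> hi; rewrite fd_map // -(Mid M n).
have hc := comp_isLam (eps_isLam hi) (eta_isLam hi).
apply: (Mext M hc (id_isLam n)).
apply: (lam_ext hc (id_isLam n)).
by move=> k hk; apply: P1.
Qed.

Lemma R2 n i : (i <= n)%N -> hcomp (face M n i.+1) (degen M n i) = idm (Mob M n).
Proof.
move=> hi; rewrite fd_map //; last by lia. rewrite -(Mid M n).
have hi1 : (i.+1 <= n.+1)%N by lia.
have hi2 : (i <= n.+1)%N by lia.
have hc := comp_isLam (eps_isLam hi1) (eta_isLam hi2).
apply: (Mext M hc (id_isLam n)).
apply: (lam_ext hc (id_isLam n)).
by move=> k hk; apply: P2.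
Qed.

Lemma R3 n i j : (i <= j)%N -> (j <= n.+1)%N -> ((0 < i)%N || (j < n.+1)%N) ->
  hcomp (face M n.+1 i) (degen M n.+1 j.+1) = hcomp (degen M n j) (face M n i).
Proof.
move=> h1 h2 h3; rewrite fd_map; try lia. rewrite df_map; try lia.
have a1 : (i <= n.+2)%N by lia.
have a2 : (j.+1 <= n.+2)%N by lia.
have a3 : (i <= n.+1)%N by lia.
apply: Mext.
- exact: comp_isLam (eps_isLam a1) (eta_isLam a2).
- exact: comp_isLam (eta_isLam h2) (eps_isLam a3).
apply: lam_ext.
- exact: comp_isLam (eps_isLam a1) (eta_isLam a2).
- exact: comp_isLam (eta_isLam h2) (eps_isLam a3).
by move=> k hk; apply: P3.
Qed.

Lemma R4 n i j : (j < i)%N -> (i <= n.+1)%N ->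
  hcomp (face M n.+1 i.+1) (degen M n.+1 j) = hcomp (degen M n j) (face M n i).
Proof.
move=> h1 h2; rewrite fd_map; try lia. rewrite df_map; try lia.
have a1 : (i.+1 <= n.+2)%N by lia.
have a2 : (j <= n.+2)%N by lia.
have a3 : (j <= n.+1)%N by lia.
apply: Mext.
- exact: comp_isLam (eps_isLam a1) (eta_isLam a2).
- exact: comp_isLam (eta_isLam a3) (eps_isLam h2).
apply: lam_ext.
- exact: comp_isLam (eps_isLam a1) (eta_isLam a2).
- exact: comp_isLam (eta_isLam a3) (eps_isLam h2).
by move=> k hk; apply: P4.
Qed.
End Rels.


Lemma alg1 (V : zmodType) (p q p' : V) : (p - q) + (p' + q) = p' + p.
Proof. by rewrite addrC -addrA (addrCA q) addrN addr0. Qed.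
Lemma alg2 (V : zmodType) (a b x i : V) : a + x + (- b + - x + i) = a - b + i.
Proof. by rewrite -!addrA; congr (_ + _); rewrite addrCA addNKr. Qed.
Lemma alg3 (V : zmodType) (i y : V) : i - (y + i) = - y.
Proof. by rewrite opprD addrCA addrN addr0. Qed.
Lemma alg4 (V : zmodType) (a b c : V) : a - b - c = a - (b + c).
Proof. by rewrite opprD addrA. Qed.

Lemma alg5 (V : zmodType) (a b x i : V) : i - (a + x + - (b + x - i)) = b - a.
Proof. by rewrite opprB addrCA opprD addrA subrK addrACA addrN addr0. Qed.
Lemma final_alg (V : zmodType) (A B X I : V) (e : int) (he : e * e = 1) :
  (B - A) *~ e = I - ((A + X) *~ e + - ((B + X + - (I *~ e)) *~ e)).
Proof.
by rewrite !mulrzDl !mulNrz -mulrzA he mulr1z alg5.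
Qed.

Section Main.
Variables (C : preadditive) (M : duplicial C).

Lemma bS_nat n : bS M n = \sum_(0 <= i < n.+2) face M n i *~ ((-1) ^+ i).
Proof. by rewrite /bS big_mkord. Qed.
Lemma dd_nat n : dd M n = \sum_(0 <= i < n.+2) degen M n i *~ ((-1) ^+ i).
Proof. by rewrite /dd big_mkord. Qed.

Variable m : nat.

Definition Psum j := \sum_(0 <= i < j) face M m i *~ ((-1) ^+ i).
Definition Pp j := hcomp (degen M m j.-1) (Psum j).
Definition Qq j := hcomp (degen M m j) (\sum_(j.+1 <= i < m.+2) face M m i *~ ((-1) ^+ i)).

Lemma col j : (j <= m.+1)%N ->
  hcomp (bS M m.+1) (degen M m.+1 j) = Pp j - Qq j.
Proof.
move=> hj; rewrite bS_nat hcomp_suml.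
under eq_bigr => i _ do rewrite hcompzl.
rewrite (@big_cat_nat _ _ _ j.+2) //; try lia.
rewrite (@big_cat_nat _ _ _ j 0 j.+2) //; try lia.
have hB : \sum_(j <= i < j.+2) hcomp (face M m.+1 i) (degen M m.+1 j) *~ (-1)^+i = 0.
  rewrite big_ltn // big_ltn // big_geq // R1 ?R2 //; try lia.
  by rewrite sgS addr0 subrr.
rewrite hB /= addr0; clear hB; congr (_ + _).
- rewrite /Pp /Psum; case: j hj => [|j] hj.
    by rewrite !big_geq // hcomp0r.
  rewrite /= hcomp_sumr; apply: eq_big_nat => i hi.
  rewrite R3 ?hcompzr //; lia.
- rewrite /Qq big_add1 /= hcomp_sumr -sumrN; apply: eq_big_nat => i hi.
  rewrite R4; try lia. by rewrite sgS hcompzr.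
Qed.

Lemma colL : hcomp (bS M m.+1) (degen M m.+1 m.+2) =
  hcomp (face M m.+1 0) (degen M m.+1 m.+2) +
  hcomp (degen M m m.+1) (\sum_(1 <= i < m.+2) face M m i *~ ((-1) ^+ i)) +
  idm (Mob M m.+1) *~ ((-1) ^+ m.+2).
Proof.
rewrite bS_nat hcomp_suml.
under eq_bigr => i _ do rewrite hcompzl.
rewrite big_ltn // big_nat_recr //= R1 // expr0 mulr1z addrA; congr (_ + _ + _).
rewrite hcomp_sumr; apply: eq_big_nat => i hi.
rewrite R3 ?hcompzr //; lia.
Qed.

Lemma dbcol j : (j <= m.+1)%N ->
  hcomp (degen M m j) (bS M m) = Pp j.+1 + Qq j.
Proof.
move=> hj; rewrite bS_nat (@big_cat_nat _ _ _ j.+1) //= ?compDr; reflexivity.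
Qed.

Lemma Pp0 : Pp 0 = 0.
Proof. by rewrite /Pp /Psum big_geq // hcomp0r. Qed.

Lemma sum_bd_db : hcomp (bS M m.+1) (dd M m.+1) + hcomp (dd M m) (bS M m) =
  Pp m.+2 *~ ((-1) ^+ m.+3) + (hcomp (bS M m.+1) (degen M m.+1 m.+2)) *~ ((-1) ^+ m.+2).
Proof.
rewrite !dd_nat hcomp_sumr hcomp_suml big_nat_recr //=.
have E1 : \sum_(0 <= j < m.+2) hcomp (bS M m.+1) (degen M m.+1 j *~ (-1) ^+ j) =
          \sum_(0 <= j < m.+2) (Pp j - Qq j) *~ (-1) ^+ j.
  apply: eq_big_nat => j hj; rewrite hcompzr col //; lia.
have E2 : \sum_(0 <= j < m.+2) hcomp (degen M m j *~ (-1) ^+ j) (bS M m) =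
          \sum_(0 <= j < m.+2) (Pp j.+1 + Qq j) *~ (-1) ^+ j.
  apply: eq_big_nat => j hj; rewrite hcompzl dbcol //; lia.
rewrite E1 E2 hcompzr addrAC -big_split /=.
have E3 : \sum_(0 <= j < m.+2) ((Pp j - Qq j) *~ (-1) ^+ j + (Pp j.+1 + Qq j) *~ (-1) ^+ j) =
          \sum_(0 <= j < m.+2) (Pp j.+1 *~ (-1) ^+ j.+2 - Pp j *~ (-1) ^+ j.+1).
  apply: eq_big_nat => j _; rewrite -mulrzDl alg1 !sgS !opprK mulrzDl //.
by rewrite E3 telescope_sumr // Pp0 mul0rz subr0.
Qed.
End Main.

Unset Implicit Arguments.
Theorem mainTheorem8 (C : preadditive) (M : duplicial C) (n : nat) :
  kappa M n = idm (Mob M n) - hcomp (bS M n) (dd M n) - d_b M n.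
Proof.
case: n => [|m].
- rewrite /kappa /= /bS /dd !big_ord_recr !big_ord0 /= !add0r.
  rewrite !compDl !compDr !hcompzl !hcompzr !R1 // R2 // expr0 expr1 !mulr1z !mulrN1z subr0 subr0.
  by rewrite subrr addr0 opprB addrC subrK.
rewrite /kappa /= alg4 sum_bd_db colL /Pp /Psum /= big_ltn // expr0 mulr1z compDr.
rewrite !(sgS _ m.+2) !(sgS _ m.+1) !opprK.
apply: final_alg.
by rewrite -exprMn mulrNN mulr1 expr1n.
Qed.
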